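(* Let $(T_1,T_2,T_3)$ be an associative Clifford extension over $(V,S^0,S^1)$ with $T_1\neq0$. Then either $\dim V=1$, or $\dim V\le\dim S^0\le4$.
   Context: All spaces are finite-dimensional real Euclidean. For a Euclidean space $X$, $\mathrm{Cl}(X)$ is the Clifford algebra with $x\cdot x=-|x|^2$; a ''$\mathrm{Cl}(X)$-module $Y\oplus Z$'' is a $\mathbb Z/2$-graded module with $X\cdot Y\subset Z$, $X\cdot Z\subset Y$, $Y\perp Z$, each $x\in X$ acting skew-symmetrically; the action is written $xy$. Let $V\neq0$ be Euclidean and $S^0\oplus S^1$ a nonzero $\mathrm{Cl}(V)$-module. A Clifford extension over $(V,S^0,S^1)$ is a triple of Euclidean spaces $T_1,T_2,T_3$ of equal dimension together with a $\mathrm{Cl}(V)$-module structure on $T_2\oplus T_3$, a $\mathrm{Cl}(S^0)$-module structure on $T_1\oplus T_2$, and a $\mathrm{Cl}(S^1)$-module structure on $T_1\oplus T_3$. It is associative if $(vs^0)t_1=v(s^0t_1)$ for all $v\in V,s^0\in S^0,t_1\in T_1$. *)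

(* Defs.v *)
(* Finite-dimensional real Euclidean spaces are modelled as
   row vectors 'rV[R]_n (R : realType) with the standard inner product. *)
From HB Require Import structures.
From mathcomp Require Import all_boot all_order all_algebra.
From mathcomp Require Import reals.
Set Implicit Arguments. Unset Strict Implicit. Unset Printing Implicit Defensive.
Import Order.TTheory GRing.Theory Num.Theory.
Local Open Scope ring_scope.

Definition dotv (R : realType) (n : nat) (u v : 'rV[R]_n) : R := (u *m v^T) 0 0.

Definition bilinear_map (R : realType) (a b c : nat)
  (f : 'rV[R]_a -> 'rV[R]_b -> 'rV[R]_c) : Prop :=
  (forall (k : R) x x' y, f (k *: x + x') y = k *: f x y + f x' y) /\
  (forall (k : R) x y y', f x (k *: y + y') = k *: f x y + f x y').

(* A Z/2-graded Cl(X)-module structure on Y (+) Z, with X = R^a, Y = R^b,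
   Z = R^c (Y and Z orthogonal in the direct sum).  mY x y = x y in Z,
   mZ x z = x z in Y.  Conditions: the action is bilinear, x.x = -|x|^2
   (i.e. x(xw) = -|x|^2 w for w in Y (+) Z), and each x acts
   skew-symmetrically on Y (+) Z, which by the grading and Y _|_ Z amounts
   to <x y, z> = - <y, x z>. *)
Definition cl_module (R : realType) (a b c : nat)
  (mY : 'rV[R]_a -> 'rV[R]_b -> 'rV[R]_c)
  (mZ : 'rV[R]_a -> 'rV[R]_c -> 'rV[R]_b) : Prop :=
  [/\ bilinear_map mY, bilinear_map mZ,
      (forall x y, mZ x (mY x y) = - dotv x x *: y),
      (forall x z, mY x (mZ x z) = - dotv x x *: z) &
      (forall x y z, dotv (mY x y) z = - dotv y (mZ x z))].

(* Main.v *)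
Require Import Defs.
From HB Require Import structures.
From mathcomp Require Import all_boot all_order all_algebra.
From mathcomp Require Import reals.
From mathcomp Require Import ring lra.
Import Order.TTheory GRing.Theory Num.Theory.
Set Implicit Arguments. Unset Strict Implicit. Unset Printing Implicit Defensive.
Local Open Scope ring_scope.

Section Aux.
Variable R : realType.

Lemma dotvE n (u v : 'rV[R]_n) : dotv u v = \sum_j u 0 j * v 0 j.
Proof. by rewrite /dotv !mxE; apply: eq_bigr => j _; rewrite mxE. Qed.

Lemma dotvC n (u v : 'rV[R]_n) : dotv u v = dotv v u.
Proof. by rewrite !dotvE; apply: eq_bigr => j _; rewrite mulrC. Qed.

Lemma dotvDl n (x y z : 'rV[R]_n) : dotv (x + y) z = dotv x z + dotv y z.
Proof. by rewrite /dotv mulmxDl mxE. Qed.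

Lemma dotvZl n k (x z : 'rV[R]_n) : dotv (k *: x) z = k * dotv x z.
Proof. by rewrite /dotv -scalemxAl mxE. Qed.

Lemma dotvZr n k (x z : 'rV[R]_n) : dotv z (k *: x) = k * dotv z x.
Proof. by rewrite dotvC dotvZl dotvC. Qed.

Lemma dotvNr n (x z : 'rV[R]_n) : dotv z (- x) = - dotv z x.
Proof. by rewrite -scaleN1r dotvZr mulN1r. Qed.

Lemma dotvNl n (x z : 'rV[R]_n) : dotv (- x) z = - dotv x z.
Proof. by rewrite dotvC dotvNr dotvC. Qed.

Lemma dotvDr n (x y z : 'rV[R]_n) : dotv z (x + y) = dotv z x + dotv z y.
Proof. by rewrite dotvC dotvDl !(dotvC z). Qed.

Lemma dotv0r n (x : 'rV[R]_n) : dotv x 0 = 0.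
Proof. by rewrite -(scale0r (0 : 'rV[R]_n)) dotvZr mul0r. Qed.

Lemma dotv_ge0 n (x : 'rV[R]_n) : 0 <= dotv x x.
Proof. by rewrite dotvE; apply: sumr_ge0 => j _; rewrite -expr2 sqr_ge0. Qed.

Lemma dotv_eq0 n (x : 'rV[R]_n) : dotv x x = 0 -> x = 0.
Proof.
rewrite dotvE => H; apply/rowP => j; rewrite mxE.
have hp : forall i : 'I_n, true -> 0 <= x 0 i * x 0 i by move=> i _; rewrite -expr2 sqr_ge0.
have := @psumr_eq0P _ _ _ _ hp H j isT.
rewrite -expr2 => /eqP; rewrite sqrf_eq0 => /eqP ->; done.
Qed.


Section Bil.
Variables (a b c : nat) (f : 'rV[R]_a -> 'rV[R]_b -> 'rV[R]_c).
Hypothesis Hf : bilinear_map f.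

Lemma bl0l y : f 0 y = 0.
Proof.
have E := Hf.1 1 0 0 y; rewrite !scale1r addr0 in E.
by apply: (addrI (f 0 y)); rewrite addr0 -E.
Qed.
Lemma bl0r x : f x 0 = 0.
Proof.
have E := Hf.2 1 x 0 0; rewrite !scale1r addr0 in E.
by apply: (addrI (f x 0)); rewrite addr0 -E.
Qed.
Lemma blDl x x' y : f (x + x') y = f x y + f x' y.
Proof. by have := Hf.1 1 x x' y; rewrite !scale1r. Qed.
Lemma blDr x y y' : f x (y + y') = f x y + f x y'.
Proof. by have := Hf.2 1 x y y'; rewrite !scale1r. Qed.
Lemma blZl k x y : f (k *: x) y = k *: f x y.
Proof. by have := Hf.1 k x 0 y; rewrite !addr0 bl0l addr0. Qed.
Lemma blZr k x y : f x (k *: y) = k *: f x y.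
Proof. by have := Hf.2 k x y 0; rewrite !addr0 bl0r addr0. Qed.
Lemma blNl x y : f (- x) y = - f x y.
Proof. by rewrite -scaleN1r blZl scaleN1r. Qed.
Lemma blNr x y : f x (- y) = - f x y.
Proof. by rewrite -scaleN1r blZr scaleN1r. Qed.
End Bil.

Section Cl.
Variables (a b c : nat) (mY : 'rV[R]_a -> 'rV[R]_b -> 'rV[R]_c)
  (mZ : 'rV[R]_a -> 'rV[R]_c -> 'rV[R]_b).
Hypothesis H : cl_module mY mZ.

Lemma clY x y : mZ x (mY x y) = - dotv x x *: y.
Proof. by case: H. Qed.
Lemma clZ x z : mY x (mZ x z) = - dotv x x *: z.
Proof. by case: H. Qed.
Lemma clS x y z : dotv (mY x y) z = - dotv y (mZ x z).
Proof. by case: H. Qed.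
Lemma clS' x y z : dotv (mZ x z) y = - dotv z (mY x y).
Proof. by rewrite dotvC -(opprK (dotv y (mZ x z))) -clS dotvC. Qed.

Lemma polY x x' y : mZ x (mY x' y) + mZ x' (mY x y) = - (2 * dotv x x') *: y.
Proof.
case: H => HY HZ _ _ _.
have := clY (x + x') y.
rewrite (blDl HY) (blDl HZ) !(blDr HZ) !clY dotvDl !dotvDr (dotvC x' x).
move=> E; apply/rowP => j; move/rowP/(_ j): E.
rewrite !mxE => {}E; lra.
Qed.
Lemma polZ x x' z : mY x (mZ x' z) + mY x' (mZ x z) = - (2 * dotv x x') *: z.
Proof.
case: H => HY HZ _ _ _.
have := clZ (x + x') z.
rewrite (blDl HZ) (blDl HY) !(blDr HY) !clZ dotvDl !dotvDr (dotvC x' x).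
move=> E; apply/rowP => j; move/rowP/(_ j): E.
rewrite !mxE => {}E; lra.
Qed.

Lemma normY x x' y : dotv (mY x y) (mY x' y) = dotv x x' * dotv y y.
Proof.
have E1 := clS x y (mY x' y).
have E2 := clS x' y (mY x y).
have E3 := polY x x' y.
have : dotv y (mZ x (mY x' y) + mZ x' (mY x y)) = dotv y (- (2 * dotv x x') *: y) by rewrite E3.
rewrite dotvDr dotvZr (dotvC (mY x' y)) in E2 *.
lra.
Qed.

Lemma normZ x x' z : dotv (mZ x z) (mZ x' z) = dotv x x' * dotv z z.
Proof.
have E1 := clS' x (mZ x' z) z.
have E2 := clS' x' (mZ x z) z.
have E3 := polZ x x' z.
have : dotv z (mY x (mZ x' z) + mY x' (mZ x z)) = dotv z (- (2 * dotv x x') *: z) by rewrite E3.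
rewrite dotvDr dotvZr (dotvC (mZ x' z)) in E2 *.
lra.
Qed.
End Cl.
Lemma exists_orth p k (f : 'I_k -> 'rV[R]_p) : (k < p)%N ->
  exists x, dotv x x = 1 /\ forall i, dotv (f i) x = 0.
Proof.
move=> kp.
pose B : 'M[R]_(k,p) := \matrix_(i, j) f i 0 j.
pose Kr := kermx B^T.
have rK : (0 < \rank Kr)%N.
  by rewrite mxrank_ker mxrank_tr subn_gt0 (leq_ltn_trans (rank_leq_row B) kp).
have [y [y0 yB]] : exists y : 'rV_p, y != 0 /\ y *m B^T = 0.
  case: (pickP (fun i => row i Kr != 0)) => [i0 Hi0 | Hn].
  - by exists (row i0 Kr); split => //; rewrite -row_mul mulmx_ker row0.
  - exfalso; have K0 : Kr = 0.
      apply/row_matrixP => i; rewrite row0; move: (Hn i) => /= /negbFE/eqP //.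
    by move: rK; rewrite K0 mxrank0.
have dy : 0 < dotv y y.
  rewrite lt0r dotv_ge0 andbT; apply/eqP => /dotv_eq0 /eqP; by rewrite (negbTE y0).
exists ((Num.sqrt (dotv y y))^-1 *: y); split.
  rewrite dotvZl dotvZr mulrA -expr2 exprVn sqr_sqrtr ?ltW // mulVf //.
  by rewrite gt_eqF.
move=> i; rewrite dotvZr dotvC.
have -> : dotv y (f i) = 0; last by rewrite mulr0.
have := yB; move/rowP/(_ i); rewrite !mxE => E.
rewrite dotvE -[RHS]E.
by apply: eq_bigr => j _; rewrite !mxE.
Qed.

Lemma dotv_delta n (i j : 'I_n) : dotv (delta_mx 0 i) (delta_mx 0 j) = (i == j)%:R :> R.
Proof.
rewrite /dotv trmx_delta mul_delta_mx_cond; case: (i == j); rewrite ?mulr0n ?mulr1n ?mxE ?eqxx /=.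
all: by [].

Qed.
End Aux.
Lemma negeq (R : realType) k (v : 'rV[R]_k) : - v = v -> v = 0.
Proof. by move=> E; apply/rowP => j; move/rowP/(_ j): E; rewrite !mxE; lra. Qed.

Theorem mainTheorem9 (R : realType) (n p q m : nat)
  (vS0 : 'rV[R]_n -> 'rV[R]_p -> 'rV[R]_q)
  (vS1 : 'rV[R]_n -> 'rV[R]_q -> 'rV[R]_p)
  (vT2 : 'rV[R]_n -> 'rV[R]_m -> 'rV[R]_m)
  (vT3 : 'rV[R]_n -> 'rV[R]_m -> 'rV[R]_m)
  (sT1 : 'rV[R]_p -> 'rV[R]_m -> 'rV[R]_m)
  (sT2 : 'rV[R]_p -> 'rV[R]_m -> 'rV[R]_m)
  (rT1 : 'rV[R]_q -> 'rV[R]_m -> 'rV[R]_m)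
  (rT3 : 'rV[R]_q -> 'rV[R]_m -> 'rV[R]_m) :
  (0 < n)%N ->                         (* V <> 0 *)
  (0 < p + q)%N ->                     (* S^0 (+) S^1 <> 0 *)
  cl_module vS0 vS1 ->                 (* Cl(V)-module S^0 (+) S^1 *)
  cl_module vT2 vT3 ->                 (* Cl(V)-module T_2 (+) T_3 *)
  cl_module sT1 sT2 ->                 (* Cl(S^0)-module T_1 (+) T_2 *)
  cl_module rT1 rT3 ->                 (* Cl(S^1)-module T_1 (+) T_3 *)
  (forall v s0 t1, rT1 (vS0 v s0) t1 = vT2 v (sT1 s0 t1)) -> (* associative *)
  (0 < m)%N ->                         (* T_1 <> 0 *)
  n = 1%N \/ (n <= p <= 4)%N.
Proof.
move=> n0 pq HS HT HsT HrT Hass m0.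
have [HS0b HS1b _ _ _] := HS.
have [HT2b HT3b _ _ _] := HT.
have [HsT1b HsT2b _ _ _] := HsT.
have [HrT1b HrT3b _ _ _] := HrT.
case: (eqVneq n 1%N) => [->|n1]; [by left|right].
have n2 : (1 < n)%N by rewrite ltn_neqAle eq_sym n1 n0.
have [v0 [v0u _]] := exists_orth (fun i : 'I_0 => 0 : 'rV[R]_n) n0.
have [w [wu wo]] := exists_orth (fun _ : 'I_1 => v0) n2.
have v0w : dotv v0 w = 0 := wo ord0.
have q0 : (0 < q)%N.
  case: (posnP q) => // q0; exfalso.
  have p0 : (0 < p)%N by rewrite q0 addn0 in pq.
  have [s [su _]] := exists_orth (fun i : 'I_0 => 0 : 'rV[R]_p) p0.
  have y0 : vS0 v0 s = 0 by apply/rowP => j; have := ltn_ord j; rewrite {2}q0.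
  have := clY HS v0 s; rewrite y0 (bl0r HS1b) v0u scaleN1r => /eqP.
  rewrite eq_sym oppr_eq0 => /eqP s0.
  by move: su; rewrite s0 dotv0r => /esym/eqP; rewrite oner_eq0.
have np : (n <= p)%N.
  have [x [xu _]] := exists_orth (fun i : 'I_0 => 0 : 'rV[R]_q) q0.
  pose A : 'M[R]_(n,p) := \matrix_(i, j) (vS1 (delta_mx 0 i) x) 0 j.
  have AA : A *m A^T = 1%:M.
    apply/matrixP => i j; rewrite [RHS]mxE.
    transitivity (dotv (vS1 (delta_mx 0 i) x) (vS1 (delta_mx 0 j) x)).
      rewrite dotvE mxE; apply: eq_bigr => k _; by rewrite !mxE.
    by rewrite (normZ HS) dotv_delta xu mulr1.
  have := mxrankM_maxl A A^T; rewrite AA mxrank1 => h.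
  exact: leq_trans h (rank_leq_col A).
rewrite np /= leqNgt; apply/negP => p5.
pose J := fun s => vS1 v0 (vS0 w s).
pose K := fun u => vT3 v0 (vT2 w u).
have KL : forall s t, K (sT1 s t) = sT1 (J s) t.
  move=> s t; rewrite /K -Hass.
  have E : vS0 w s = - vS0 v0 (J s) by rewrite /J (clZ HS) v0u scaleN1r opprK.
  rewrite E (blNl HrT1b) Hass (blNr HT3b) (clY HT) v0u scaleN1r; exact: opprK.
have Jo : forall s, dotv (J s) s = 0.
  by move=> s; rewrite /J (clS' HS) (normY HS) (dotvC w) v0w mul0r oppr0.
have Jn : forall s, dotv (J s) (J s) = dotv s s.
  by move=> s; rewrite /J (normZ HS) v0u mul1r (normY HS) wu mul1r.
have Q : forall a b t, dotv a a = 1 -> dotv b b = 1 -> dotv a b = 0 -> dotv (J a) b = 0 ->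
   sT2 b (sT1 (J b) t) = - sT2 a (sT1 (J a) t).
  move=> a b t au bu ab Jab.
  have Ku : forall u, K u = - sT1 (J a) (sT2 a u).
    move=> u; have h := KL a (sT2 a u); rewrite (clZ HsT) au scaleN1r in h.
    by rewrite /K (blNr HT2b) (blNr HT3b) in h; rewrite -h opprK.
  rewrite -KL Ku.
  have E1 : sT2 a (sT1 b t) = - sT2 b (sT1 a t).
    have h := polY HsT a b t; rewrite ab mulr0 oppr0 scale0r in h.
    by apply/eqP; rewrite -addr_eq0 h.
  rewrite E1 (blNr HsT1b) opprK.
  have E2 : forall z, sT1 (J a) (sT2 b z) = - sT1 b (sT2 (J a) z).
    move=> z; have h := polZ HsT (J a) b z; rewrite Jab mulr0 oppr0 scale0r in h.
    by apply/eqP; rewrite -addr_eq0 h.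
  rewrite E2 (blNr HsT2b) (clY HsT) bu scaleN1r opprK.
  have h := polY HsT (J a) a t; rewrite Jo mulr0 oppr0 scale0r in h.
  by apply/eqP; rewrite -addr_eq0 h.
have p0 : (0 < p)%N by apply: leq_ltn_trans _ p5.
have p2 : (2 < p)%N by apply: leq_ltn_trans _ p5.
have [a [au _]] := exists_orth (fun i : 'I_0 => 0 : 'rV[R]_p) p0.
have [b [bu bo]] := exists_orth (fun i : 'I_2 => if val i == 0%N then a else J a) p2.
have [c [cu co]] := exists_orth (fun i : 'I_4 => nth 0 [:: a; J a; b; J b] i) p5.
have [t [tu _]] := exists_orth (fun i : 'I_0 => 0 : 'rV[R]_m) m0.
have ab := bo (@Ordinal 2 0 isT); have Jab := bo (@Ordinal 2 1 isT).
have ac := co (@Ordinal 4 0 isT); have Jac := co (@Ordinal 4 1 isT).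
have bc := co (@Ordinal 4 2 isT); have Jbc := co (@Ordinal 4 3 isT).
simpl in ab, Jab, ac, Jac, bc, Jbc.
have Qab := Q a b t au bu ab Jab.
have Qac := Q a c t au cu ac Jac.
have Qbc := Q b c t bu cu bc Jbc.
have X0 : sT2 a (sT1 (J a) t) = 0.
  by apply: negeq; move: Qbc; rewrite Qac Qab opprK.
have h1 := clZ HsT a (sT1 (J a) t); rewrite X0 (bl0r HsT1b) au scaleN1r in h1.
have Y0 : sT1 (J a) t = 0 by apply/eqP; rewrite -oppr_eq0 -h1.
have h2 := clY HsT (J a) t; rewrite Y0 (bl0r HsT2b) Jn au scaleN1r in h2.
have t0 : t = 0 by apply/eqP; rewrite -oppr_eq0 -h2.
by move: tu; rewrite t0 dotv0r => /esym/eqP; rewrite oner_eq0.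
Qed.
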